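(* Assume $\alpha\ge(N-1)/(N-2)$, let $1\le k\le N/2$ and let $v\in E_k$. If $k>1$ or if $t(v)<1$, then $v$ is linearly unstable.
   Context: Let $N\ge3$, $\alpha>1$, and $A_{i,j}=1-\delta_{i,j}$ for $i,j\le N$. Let $\Delta=\{v\in\mathbb R_+^N:\sum_iv_i=1,\ v_i\le3/4\ \forall i\}$. For $v$ with nonnegative coordinates let $v^\alpha=(v_i^\alpha)_i$, $H(v)=\sum_{i\neq j}v_i^\alpha v_j^\alpha$, $\pi_i(v)=v_i^\alpha(Av^\alpha)_i/H(v)$, and on $\Delta$ let $F(v)=-v+\pi(v)$. An equilibrium is $v\in\Delta$ with $F(v)=0$. For $1\le k\le N/2$, $E_k$ denotes the set of equilibria $v$ with all coordinates positive, different from the center $(1/N,\dots,1/N)$, and such that $v_1=\dots=v_k$ and $v_{k+1}=\dots=v_N$. For $v\in E_k$, $t(v)=v_N/v_1$. With $DF(v)$ the differential at $v$ of $v\mapsto-v+\pi(v)$ acting on $\{x:\sum_ix_i=0\}$, an equilibrium is linearly unstable if some eigenvalue of $DF(v)$ has positive real part. *)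

(* Defs.v *)
From HB Require Import structures.
From mathcomp Require Import all_boot all_order all_algebra.
From mathcomp Require Import all_classical all_reals all_analysis.
From mathcomp Require Import complex.
Set Implicit Arguments. Unset Strict Implicit. Unset Printing Implicit Defensive.
Import Order.TTheory GRing.Theory Num.Theory.
Local Open Scope ring_scope.

Section Defs.
Variables (R : realType) (N : nat) (alpha : R).

Definition vpow (v : 'I_N -> R) (i : 'I_N) : R := v i `^ alpha.

Definition Amat : 'M[R]_N := \matrix_(i, j) (1 - (i == j)%:R).

Definition Avpow (v : 'I_N -> R) (i : 'I_N) : R :=
  \sum_(j < N) Amat i j * vpow v j.

Definition Hfun (v : 'I_N -> R) : R :=
  \sum_(i < N) \sum_(j < N | i != j) vpow v i * vpow v j.

Definition pif (v : 'I_N -> R) (i : 'I_N) : R :=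
  vpow v i * Avpow v i / Hfun v.

Definition Ffun (v : 'I_N -> R) (i : 'I_N) : R := - v i + pif v i.

Definition inDelta (v : 'I_N -> R) : Prop :=
  (forall i, 0 <= v i) /\ \sum_(i < N) v i = 1 /\ (forall i, v i <= 3 / 4).

Definition equilibrium (v : 'I_N -> R) : Prop :=
  inDelta v /\ forall i, Ffun v i = 0.

Definition center : 'I_N -> R := fun _ => 1 / N%:R.

(* E_k (indices are 0-based: v_1..v_k are v 0 .. v (k-1)) *)
Definition inEk (k : nat) (v : 'I_N -> R) : Prop :=
  [/\ equilibrium v,
      (forall i, 0 < v i),
      v <> center,
      (forall i j : 'I_N, (i < k)%N -> (j < k)%N -> v i = v j) &
      (forall i j : 'I_N, (k <= i)%N -> (k <= j)%N -> v i = v j)].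

Definition tratio (v : 'I_N -> R) : R :=
  match N as n return ('I_n -> R) -> R with
  | 0 => fun _ => 0
  | n.+1 => fun w => w ord_max / w ord0
  end v.

Definition jacF (v : 'I_N -> R) : 'M[R]_N :=
  \matrix_(i, j)
    derive1 (fun s : R => Ffun (fun l => v l + (if l == j then s else 0)) i) 0.

(* linear instability: DF(v), acting on {x : sum x = 0}, has an eigenvalue
   with positive real part (complex eigenvalue / complex eigenvector in the
   complexified hyperplane). *)
Definition lin_unstable (v : 'I_N -> R) : Prop :=
  exists (lam : complex.complex R) (z : 'cV[complex.complex R]_N),
    [/\ z != 0,
        \sum_(i < N) z i ord0 = 0,
        map_mx (fun r : R => complex.Complex r 0) (jacF v) *m z = lam *: z &
        0 < complex.Re lam].

End Defs.

(* Main.v *)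
Require Import Defs.
From HB Require Import structures.
From mathcomp Require Import all_boot all_order all_algebra.
From mathcomp Require Import all_classical all_reals all_analysis.
From mathcomp Require Import complex.
From mathcomp Require Import ring lra zify.
Import Order.TTheory GRing.Theory Num.Theory.
Local Open Scope ring_scope.


Section S.
Variables (R : realType) (N : nat) (alpha : R).

Lemma Avpow_E (u : 'I_N -> R) i :
  Avpow alpha u i = \sum_l vpow alpha u l - vpow alpha u i.
Proof.
rewrite /Avpow (bigD1 i) //= !mxE eqxx subrr mul0r add0r.
rewrite [X in _ = X - _](bigD1 i) //= addrC addrK.
by apply: eq_bigr => l /negbTE; rewrite !mxE eq_sym => ->; rewrite subr0 mul1r.
Qed.

Lemma Hfun_E (u : 'I_N -> R) :
  Hfun alpha u = \sum_i vpow alpha u i * (\sum_l vpow alpha u l - vpow alpha u i).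
Proof.
rewrite /Hfun; apply: eq_bigr => i _; rewrite -mulr_sumr; congr (_ * _).
rewrite [X in _ = X - _](bigD1 i) //= addrC addrK.
by apply: eq_bigl => l; rewrite eq_sym.
Qed.

Lemma sum_upd (x : 'I_N -> R) j y :
  \sum_l (if l == j then y else x l) = \sum_l x l - x j + y.
Proof.
rewrite (bigD1 j) //= eqxx [X in _ = X - _ + _](bigD1 j) //=.
rewrite (eq_bigr x); last by move=> l /negbTE ->.
ring.
Qed.

Lemma H_upd (x : 'I_N -> R) j y :
  let x' := fun l => if l == j then y else x l in
  \sum_i x' i * (\sum_l x' l - x' i) =
  \sum_i x i * (\sum_l x l - x i) + 2 * (y - x j) * (\sum_l x l - x j).
Proof.
move=> x'; rewrite sum_upd.
set O := \sum_l x l - x j.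
have HO : O = \sum_(l | l != j) x l.
  by rewrite /O (bigD1 j) //= addrC addrK.
rewrite (bigD1 j) //= [in RHS](bigD1 j) //= /x' eqxx.
have -> : \sum_(i | i != j) (if i == j then y else x i) * (O + y - (if i == j then y else x i))
  = \sum_(i | i != j) (x i * (O + x j - x i)) + (y - x j) * O.
  rewrite HO mulr_sumr -big_split /=; apply: eq_bigr => l /negbTE ->; ring.
have -> : \sum_l x l = O + x j by rewrite /O subrK.
ring.
Qed.

Lemma dphi (x0 : R) : 0 < x0 ->
  is_derive (0:R) (1:R) (fun s => (x0 + s) `^ alpha) (alpha * x0 `^ (alpha - 1)).
Proof.
move=> x0p.
have hg : is_derive (0:R) (1:R) (fun s : R => x0 + s) 1.
  have := is_deriveD (f := cst x0) (g := id) (x:=0) (v:=1) (df := 0) (dg := 1).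
  by rewrite add0r; apply.
have hf : is_derive ((fun s : R => x0 + s) 0) 1 (fun a : R => a `^ alpha) (alpha * (x0 + 0) `^ (alpha - 1)).
  by apply: (@is_derive1_powR R alpha (x0 + 0)); rewrite addr0.
have := is_derive1_comp hf hg.
by rewrite addr0 mulr1.
Qed.

Lemma dgen (x0 c A B C D E F vi : R) : 0 < x0 ->
  E + F * x0 `^ alpha != 0 ->
  derive1 (fun s => -(vi + c * s) + (A + B * (x0 + s) `^ alpha) * (C + D * (x0 + s) `^ alpha)
     / (E + F * (x0 + s) `^ alpha)) 0 =
  - c + alpha * x0 `^ (alpha - 1) *
     (((B * (C + D * x0 `^ alpha) + D * (A + B * x0 `^ alpha)) * (E + F * x0 `^ alpha)
       - (A + B * x0 `^ alpha) * (C + D * x0 `^ alpha) * F) / (E + F * x0 `^ alpha) ^+ 2).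
Proof.
move=> x0p hne.
set phi := fun s => (x0 + s) `^ alpha.
have hp := @dphi x0 x0p; rewrite -/phi in hp.
have hlin : is_derive (0:R) (1:R) (fun s : R => -(vi + c * s)) (- c).
  have h3 := is_deriveN (is_deriveD (is_derive_cst vi (0:R) (1:R)) (is_deriveZ c (is_derive_id (0:R) (1:R)))).
  move: h3; rewrite add0r /GRing.scale /= mulr1; exact.
have haff : forall a b : R, is_derive (0:R) (1:R) (fun s => a + b * phi s) (b * (alpha * x0 `^ (alpha - 1))).
  move=> a b.
  have h3 := is_deriveD (is_derive_cst a (0:R) (1:R)) (is_deriveZ b hp).
  suff -> : b * (alpha * x0 `^ (alpha - 1)) = 0 + b *: (alpha * x0 `^ (alpha - 1)) by exact: h3.
  by rewrite add0r.
have hden : (fun s => E + F * phi s) 0 != 0 by rewrite /phi /= addr0.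
have hV := @is_deriveV R (fun s => E + F * phi s) 0 _ 1 hden (haff E F).
have hM := is_deriveM (haff A B) (haff C D).
have hM2 := is_deriveM hM hV.
have hT := is_deriveD hlin hM2.
rewrite derive1E.
rewrite (@derive_val _ _ _ _ _ _ _ hT).
rewrite /phi /= !addr0.
set W := x0 `^ alpha; set P := x0 `^ (alpha - 1).
have -> : ((fun s : R => A + B * (x0 + s) `^ alpha) *
    (fun s : R => C + D * (x0 + s) `^ alpha)) 0 = (A + B * W) * (C + D * W).
  by rewrite mulrfctE /= addr0.
rewrite /GRing.scale /=.
by field.
Qed.
End S.

Section Main.
Variables (R : realType) (N : nat) (alpha : R) (v : 'I_N -> R).

Local Notation w := (vpow alpha v).
Local Notation S := (\sum_l vpow alpha v l).
Local Notation H := (Hfun alpha v).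

Definition Jf (b : bool) (wi x : R) : R :=
  let W := x `^ alpha in let T := S - W in
  let E := H - 2 * W * T in let F := 2 * T in
  if b then
    - 1 + alpha * x `^ (alpha - 1) *
     (((1 * (T + 0 * W) + 0 * (0 + 1 * W)) * (E + F * W)
       - (0 + 1 * W) * (T + 0 * W) * F) / (E + F * W) ^+ 2)
  else
    - 0 + alpha * x `^ (alpha - 1) *
     (((0 * ((S - W - wi) + 1 * W) + 1 * (wi + 0 * W)) * (E + F * W)
       - (wi + 0 * W) * ((S - W - wi) + 1 * W) * F) / (E + F * W) ^+ 2).

Lemma vpow_pert j s :
  vpow alpha (fun l => v l + (if l == j then s else 0)) =
  (fun l => if l == j then (v j + s) `^ alpha else w l).
Proof.
apply: funext => l; rewrite /vpow; case: eqP => [->|_]; by rewrite ?addr0.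
Qed.

Lemma F_pert i j s :
  Ffun alpha (fun l => v l + (if l == j then s else 0)) i =
  let W := v j `^ alpha in let T := S - W in
  let E := H - 2 * W * T in let F := 2 * T in
  if i == j then
    - (v j + 1 * s) + (0 + 1 * (v j + s) `^ alpha) * (T + 0 * (v j + s) `^ alpha)
       / (E + F * (v j + s) `^ alpha)
  else
    - (v i + 0 * s) + (w i + 0 * (v j + s) `^ alpha) * ((S - W - w i) + 1 * (v j + s) `^ alpha)
       / (E + F * (v j + s) `^ alpha).
Proof.
rewrite /Ffun /pif Avpow_E Hfun_E vpow_pert H_upd sum_upd -Hfun_E /=.
set y := (v j + s) `^ alpha.
have -> : H + 2 * (y - w j) * (S - w j) =
  H - 2 * v j `^ alpha * (S - v j `^ alpha) + 2 * (S - v j `^ alpha) * y.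
  rewrite /vpow; ring.
have [->|/negbTE hij] := eqVneq i j; rewrite ?eqxx ?hij /vpow; ring.
Qed.

Lemma jacE i j : 0 < v j -> H != 0 -> jacF alpha v i j = Jf (i == j) (w i) (v j).
Proof.
move=> vjp Hn; rewrite /jacF mxE.
have -> : (fun s => Ffun alpha (fun l => v l + (if l == j then s else 0)) i) =
  (fun s => let W := v j `^ alpha in let T := S - W in
  let E := H - 2 * W * T in let F := 2 * T in
  if i == j then
    - (v j + 1 * s) + (0 + 1 * (v j + s) `^ alpha) * (T + 0 * (v j + s) `^ alpha)
       / (E + F * (v j + s) `^ alpha)
  else
    - (v i + 0 * s) + (w i + 0 * (v j + s) `^ alpha) * ((S - v j `^ alpha - w i) + 1 * (v j + s) `^ alpha)
       / (E + F * (v j + s) `^ alpha)).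
  by apply: funext => s; rewrite F_pert.
have hE : H - 2 * v j `^ alpha * (S - v j `^ alpha) + 2 * (S - v j `^ alpha) * v j `^ alpha != 0.
  by rewrite (_ : _ + _ = H) //; ring.
rewrite /Jf; destruct (i == j); exact: dgen.
Qed.

End Main.



Lemma lam_pos (R : realType) (N : nat) (alpha : R) (v : 'I_N -> R) (p : 'I_N) :
  0 < v p -> Hfun alpha v != 0 ->
  v p = vpow alpha v p * (\sum_l vpow alpha v l - vpow alpha v p) / Hfun alpha v ->
  N%:R * vpow alpha v p < \sum_l vpow alpha v l -> 1 < alpha ->
  2 * alpha - 1 <= (alpha - 1) * N%:R ->
  0 < @Jf R N alpha v true (vpow alpha v p) (v p) - @Jf R N alpha v false (vpow alpha v p) (v p).
Proof.
move=> vp Hn hc hS a1 hN.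
have N1 : 1 <= N%:R :> R by rewrite ler1n; case: (N) (p) => // [[]].
rewrite /Jf /=.
have hP : v p `^ (alpha - 1) = v p `^ alpha / v p.
  by rewrite powRB ?powRr1 ?ltW // gt_eqF // implybT.
rewrite hP.
move: hc hS; rewrite /vpow.
set W := v p `^ alpha; set S0 := \sum_l _; set H0 := Hfun alpha v.
have Wp : 0 < W by rewrite powR_gt0.
move=> hc hS.
rewrite hc.
have TP : 0 < S0 - W by nra.
rewrite (_ : H0 - 2 * W * (S0 - W) + 2 * (S0 - W) * W = H0); last by ring.
rewrite [X in 0 < X](_ : _ = (alpha * (S0 - 2 * W) - (S0 - W)) / (S0 - W)).
  apply: divr_gt0 => //; nra.
by field; rewrite Hn !gt_eqF.
Qed.

Lemma sum_delta (R : realType) (N : nat) (a : 'I_N) :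
  \sum_(i < N) (delta_mx a (0 : 'I_1) i ord0 : complex R) = 1.
Proof.
rewrite (bigD1 a) //= mxE !eqxx big1 ?addr0 // => i /negbTE hi.
by rewrite mxE hi.
Qed.

Lemma unstable_pair (R : realType) (N : nat) (alpha : R) (v : 'I_N -> R) (p q : 'I_N) :
  p != q -> v p = v q -> (forall l, 0 < v l) -> Ffun alpha v p = 0 ->
  N%:R * vpow alpha v p < \sum_l vpow alpha v l -> 1 < alpha ->
  2 * alpha - 1 <= (alpha - 1) * N%:R ->
  lin_unstable alpha v.
Proof.
move=> pq hvq vpos hF hS a1 hN.
have vp := vpos p.
have hc : v p = vpow alpha v p * (\sum_l vpow alpha v l - vpow alpha v p) / Hfun alpha v.
  by move: hF; rewrite /Ffun /pif Avpow_E => /eqP; rewrite addrC subr_eq0 => /eqP.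
have Hn : Hfun alpha v != 0.
  apply/negP => /eqP h0; move: hc; rewrite h0 invr0 mulr0 => h.
  by move: vp; rewrite h ltxx.
have hL := @lam_pos R N alpha v p vp Hn hc hS a1 hN.
set L := @Jf R N alpha v true _ _ - _ in hL.
exists (Complex L 0), (delta_mx p 0 - delta_mx q 0); split.
- apply/negP => /eqP /matrixP /(_ p ord0); rewrite !mxE !eqxx (negbTE pq) /=.
  by rewrite subr0 => /eqP; rewrite oner_eq0.
- rewrite (eq_bigr (fun i => delta_mx p (0 : 'I_1) i ord0 - delta_mx q (0 : 'I_1) i ord0)).
    by rewrite sumrB !sum_delta subrr.
  by move=> i _; rewrite !mxE.
- rewrite mulmxBr -!colE; apply/matrixP => i j; rewrite !mxE (ord1 j) eqxx !andbT.
  have jE : forall i j, derive1 (fun s : R => Ffun alpha (fun l => v l + (if l == j then s else 0)) i) 0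
      = @Jf R N alpha v (i == j) (vpow alpha v i) (v j).
    by move=> i' j'; rewrite -jacE // /jacF mxE.
  rewrite !jE -hvq.
  have hw : vpow alpha v q = vpow alpha v p by rewrite /vpow hvq.
  have [->|nip] := eqVneq i p.
    rewrite (negbTE pq) /L; set a := Jf _ _ _ _ true _ _; set b := Jf _ _ _ _ false _ _.
    clearbody a b; simpc; congr Complex; ring.
  have [->|niq] := eqVneq i q.
    rewrite hw /L; set a := Jf _ _ _ _ true _ _; set b := Jf _ _ _ _ false _ _.
    clearbody a b; simpc; congr Complex; ring.
  rewrite ?(negbTE nip) ?(negbTE niq).
  set g := Jf _ _ _ _ false _ _; clearbody g L; simpc; congr Complex; ring.
- by [].
Qed.



Lemma sum_gt (R : realType) (N : nat) (x : 'I_N -> R) (m : 'I_N) (W : R) :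
  (forall l, W <= x l) -> W < x m -> N%:R * W < \sum_l x l.
Proof.
move=> hle hlt.
have -> : N%:R * W = \sum_(l < N) W by rewrite sumr_const card_ord mulr_natl.
rewrite (bigD1 m) //= [X in _ < X](bigD1 m) //=.
apply: ltr_leD => //; apply: ler_sum => l _; exact: hle.
Qed.

Lemma powR_two (R : realType) (alpha : R) (N : nat) (v : 'I_N -> R) (m : 'I_N) (a b : R) :
  0 < alpha -> 0 < b -> b < a -> (forall l, v l = a \/ v l = b) -> v m = a ->
  N%:R * b `^ alpha < \sum_l vpow alpha v l.
Proof.
move=> al bp ba hv hm.
apply: (@sum_gt R N _ m) => [l|].
  rewrite /vpow; case: (hv l) => ->; last by [].
  by apply: ge0_ler_powR; rewrite ?nnegrE ?ltW //; lra.
rewrite /vpow hm; apply: gt0_ltr_powR; rewrite ?nnegrE ?ltW //; lra.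
Qed.

Theorem lemma4p4 (R : realType) (N : nat) (alpha : R) (k : nat)
  (v : 'I_N -> R) :
  (3 <= N)%N -> 1 < alpha ->
  (N%:R - 1) / (N%:R - 2) <= alpha ->
  (1 <= k)%N -> (k * 2 <= N)%N ->
  inEk alpha k v ->
  (1 < k)%N \/ tratio v < 1 ->
  lin_unstable alpha v.
Proof.
move=> N3 a1 hal k1 k2 [[[hpos [hsum hle]] hF] vpos vnc hb1 hb2] hk.
have hN : 2 * alpha - 1 <= (alpha - 1) * N%:R.
  have N2 : 0 < N%:R - 2 :> R.
    by rewrite subr_gt0 ltr_nat.
  move: hal; rewrite ler_pdivrMr // => h; nra.
destruct N as [|n]; first by [].
set a := v ord0; set b := v ord_max.
have kle : (k <= n)%N by lia.
have hv : forall l, v l = a \/ v l = b.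
  move=> l; case: (ltnP l k) => hl; [left; apply: hb1 | right; apply: hb2] => //.
have hab : a != b.
  apply/eqP => eab; apply: vnc; apply: funext => l.
  have hl : v l = a by case: (hv l) => -> //.
  have : \sum_(i < n.+1) v i = n.+1%:R * a.
    by rewrite (eq_bigr (fun _ => a)) ?sumr_const ?card_ord ?mulr_natl // => i _; case: (hv i) => ->.
  rewrite hsum /Defs.center hl => h1; rewrite [X in X / _]h1 mulrC mulKf // pnatr_eq0.
have apos : 0 < a by apply: vpos.
have bpos : 0 < b by apply: vpos.
have al0 : 0 < alpha by lra.
case: (ltgtP a b) hab => // hlt _.
-
  have k1' : (1 < k)%N.
    case: hk => // ht; exfalso; move: ht; rewrite /tratio /= -/a -/b.
    by rewrite ltr_pdivrMr // mul1r ltNge (ltW hlt).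
  have i1 : (1 < n.+1)%N by lia.
  apply: (@unstable_pair R n.+1 alpha v ord0 (Ordinal i1)) => //.
  + by apply: hb1.
  + apply: (@powR_two R alpha n.+1 v ord_max (v ord_max) (v ord0)) => //.
    by move=> l; case: (hv l) => ->; [right|left].
-
  have i2 : (n.-1 < n.+1)%N by lia.
  apply: (@unstable_pair R n.+1 alpha v ord_max (Ordinal i2)) => //.
  + by apply/eqP => /(congr1 val) /=; lia.
  + by apply: hb2 => //=; lia.
  + apply: (@powR_two R alpha n.+1 v ord0 (v ord0) (v ord_max)) => //.
Qed.
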